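(* The subspace $K[SI[\infty]]$ of $K[\mathcal{T}[\infty]]$ spanned by sorted trees is a graded sub-$2$-associative Hopf algebra of $(K[\mathcal{T}[\infty]],\star,/,\Delta_{\mathrm s})$: it contains the one-node tree, is closed under both products $\star$ and $/$, and $\Delta_{\mathrm s}(K[SI[\infty]])\subseteq K[SI[\infty]]\otimes K[SI[\infty]]$.
   Context: $K$ is a field. A tree is a finite planar rooted tree, degree = number of non-root nodes, $\odot$ the one-node tree. An $n$--tree is a tree of degree $n$ whose non-root nodes are labelled bijectively by $\{1,\dots,n\}$; $\mathcal{T}[\infty]$ is the set of all $n$--trees. An increasing tree is an $n$--tree whose labels strictly increase along every path from the root; a sorted tree is an increasing tree in which, at every node, the labels of its children increase from left to right; $SI[\infty]$ is the set of sorted trees. Nodes $N(t)$ are ordered by depth-first post-order (subtrees left to right recursively, then the node; root maximal); write $u_1<\dots<u_n$ for non-root nodes. For a set $A$ of non-root nodes, $t_A$ is obtained by deleting non-root nodes outside $A$ (children attached in order to the parent in place of the deleted node), labels kept; $t_{[i,j]}=t_{\{u_h,\dots,u_k\}}$ if $i\le j$ and $[i,j]\cap[n]=[h,k]\ne\emptyset$, else $\odot$. Standardization $\mathrm s(t)$ relabels an $\mathbb N$-labelled tree with distinct labels by $1,\dots,|t|$ preserving relative order. $\Delta_{\mathrm s}(t)=\sum_{k=0}^n\mathrm s(t_{[1,k]})\otimes\mathrm s(t_{[k+1,n]})$. $w[m]$ adds $m$ to every label. Dot product $t\cdot w$: identify the roots, root-children of $t$ followed by those of $w$; $t/w=t\cdot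 w[|t|]$. A partition of $u$ of degree $n\ge1$ is an ordered tuple $(u_{[n_0+1,n_1]},\dots,u_{[n_{k-1}+1,n_k]})$, $0=n_0<\dots<n_k=n$; for $P=(u_1,\dots,u_k)$, $I(P,t)$ is the set of maps $f$ from blocks to $N(t)$ with $f(u_1)<\dots<f(u_k)$; $t\#_{P,f}u$ identifies the root of each $u_i$ with $f(u_i)$, the root-children of $u_i$ becoming children of $f(u_i)$ to the right of its original children, labels kept; $t* u=\sum_{P,f}t\#_{P,f}u$ ($|u|\ge1$), $t*\odot=t$; $t\star w=t* w[|t|]$. *)

(* Defs.v *)
From HB Require Import structures.
From mathcomp Require Import all_boot all_order all_algebra.
Set Implicit Arguments. Unset Strict Implicit. Unset Printing Implicit Defensive.
Import GRing.Theory.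
Local Open Scope ring_scope.

Inductive lnode := LNode (lab : nat) (ch : seq lnode).
(* A tree = the ordered list of the root's children (the root is unlabelled).
   The one-node tree (odot) is [::]. *)
Definition tree := seq lnode.

Fixpoint enc (t : lnode) : GenTree.tree unit :=
  let: LNode a ch := t in GenTree.Node a (map enc ch).
Fixpoint dec (g : GenTree.tree unit) : lnode :=
  match g with
  | GenTree.Leaf _ => LNode 0 [::]
  | GenTree.Node a gs => LNode a (map dec gs)
  end.
Lemma encK : cancel enc dec.
Proof.
rewrite /cancel; fix IH 1; case=> a ch /=; congr LNode; elim: ch => //= c ch IHch.
by rewrite IH IHch.
Qed.
HB.instance Definition _ := Countable.copy lnode (can_type encK).

Definition lab_of (t : lnode) := let: LNode a _ := t in a.

Fixpoint sz (t : lnode) : nat := let: LNode _ ch := t in (sumn (map sz ch)).+1.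
Definition deg (t : tree) : nat := sumn (map sz t).

Fixpoint post (t : lnode) : seq nat :=
  let: LNode a ch := t in flatten (map post ch) ++ [:: a].
Definition postF (t : tree) : seq nat := flatten (map post t).

(* n-tree: labels are a bijection onto {1,...,n} *)
Definition is_ntree (t : tree) : bool := perm_eq (postF t) (iota 1 (deg t)).

Fixpoint sorted_node (lo : nat) (t : lnode) : bool :=
  let: LNode a ch := t in
  [&& (lo < a)%N, sorted ltn (map lab_of ch) & all (sorted_node a) ch].
Definition sorted_tree (t : tree) : bool :=
  [&& is_ntree t, sorted ltn (map lab_of t) & all (sorted_node 0) t].

Fixpoint maplab (g : nat -> nat) (t : lnode) : lnode :=
  let: LNode a ch := t in LNode (g a) (map (maplab g) ch).
Definition maplabF g (t : tree) : tree := map (maplab g) t.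
Definition std (t : tree) : tree :=
  maplabF (fun a => count (fun b => (b <= a)%N) (postF t)) t.
Definition shift (m : nat) (w : tree) : tree := maplabF (addn m) w.

(** * Restriction t_A, nodes identified by their post-order position (1-based) *)
Fixpoint restr (P : pred nat) (off : nat) (t : lnode) {struct t} : seq lnode :=
  let: LNode a ch := t in
  let fix go off l := match l with
    | [::] => [::]
    | c :: l' => restr P off c ++ go (off + sz c)%N l'
    end in
  let ch' := go off ch in
  if P (off + sz t)%N then [:: LNode a ch'] else ch'.
Fixpoint restrF_from (P : pred nat) (off : nat) (f : tree) : tree :=
  match f with
  | [::] => [::]
  | c :: f' => restr P off c ++ restrF_from P (off + sz c)%N f'
  end.
Definition restrF (P : pred nat) (t : tree) : tree := restrF_from P 0 t.
(* t_[i,j] (equal to odot when [i,j] meets [n] trivially) *)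
Definition sub_int (t : tree) (i j : nat) : tree :=
  restrF (fun p => (i <= p <= j)%N) t.

(** * Grafting: g p is the forest appended as rightmost children of the node
    at post-order position p (the root has position deg t + 1). *)
Fixpoint graft (g : nat -> tree) (off : nat) (t : lnode) {struct t} : lnode :=
  let: LNode a ch := t in
  let fix go off l := match l with
    | [::] => [::]
    | c :: l' => graft g off c :: go (off + sz c)%N l'
    end in
  LNode a (go off ch ++ g (off + sz t)%N).
Fixpoint graftF_from (g : nat -> tree) (off : nat) (f : tree) : tree :=
  match f with
  | [::] => [::]
  | c :: f' => graft g off c :: graftF_from g (off + sz c)%N f'
  end.
Definition graftF (g : nat -> tree) (t : tree) : tree :=
  graftF_from g 0 t ++ g (deg t).+1.

Fixpoint subseqs (s : seq nat) : seq (seq nat) :=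
  match s with
  | [::] => [:: [::]]
  | x :: s' => [seq x :: r | r <- subseqs s'] ++ subseqs s'
  end.

(* t # _{P,f} u, the partition given by the cut points [c]
   (0 = n_0 < c_1 < ... < c_{k-1} < n_k = n) and f by the increasing
   positions [r] (of length k) in N(t) = {1, ..., deg t + 1} *)
Definition graft_part (t u : tree) (c r : seq nat) : tree :=
  let n := deg u in
  let highs := rcons c n in
  let lows := 0%N :: c in
  let blocks := [seq restrF (fun p => (lh.1 < p <= lh.2)%N) u | lh <- zip lows highs] in
  let g p := flatten [seq rb.2 | rb <- zip r blocks & rb.1 == p] in
  graftF g t.

(* t * u, as a list of trees (a formal sum with coefficients 1) *)
Definition star0 (t u : tree) : seq tree :=
  if u is [::] then [:: t] else
  flatten [seq [seq graft_part t u c r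
               | r <- subseqs (iota 1 (deg t).+1) & size r == (size c).+1]
          | c <- subseqs (iota 1 (deg u).-1)].
Definition starT (t w : tree) : seq tree := star0 t (shift (deg t) w).
Definition overT (t w : tree) : seq tree := [:: t ++ shift (deg t) w].
Definition DeltaT (t : tree) : seq (tree * tree) :=
  [seq (std (sub_int t 1 k), std (sub_int t k.+1 (deg t))) | k <- iota 0 (deg t).+1].

(** * Free vector spaces as formal sums *)
Definition fsum (K : fieldType) (X : Type) := seq (K * X).
Definition coef (K : fieldType) (X : eqType) (v : fsum K X) (x : X) : K :=
  \sum_(p <- v | p.2 == x) p.1.
Definition in_span (K : fieldType) (X : eqType) (P : pred X) (v : fsum K X) :=
  forall x, coef v x != 0 -> P x.
Definition bilin (K : fieldType) (op : tree -> tree -> seq tree)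
  (x y : fsum K tree) : fsum K tree :=
  flatten [seq flatten [seq [seq (a.1 * b.1, z) | z <- op a.2 b.2] | b <- y] | a <- x].
(* linear extension of the coproduct into K[T] (x) K[T] = K[T x T] *)
Definition coprod (K : fieldType) (x : fsum K tree) : fsum K (tree * tree) :=
  flatten [seq [seq (a.1, pr) | pr <- DeltaT a.2] | a <- x].

(* Main.v *)
Require Import Defs.
From HB Require Import structures.
From mathcomp Require Import all_boot all_order all_algebra zify.
Set Implicit Arguments. Unset Strict Implicit. Unset Printing Implicit Defensive.

Fixpoint allQ (Q : lnode -> Prop) (l : seq lnode) : Prop :=
  if l is c :: l' then Q c /\ allQ Q l' else True.

Definition lnode_ind2 (Q : lnode -> Prop)
  (H : forall a ch, allQ Q ch -> Q (LNode a ch)) : forall t, Q t :=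
  fix F t := let: LNode a ch := t in
    H a ch ((fix G l := match l return allQ Q l with
              | [::] => I | c :: l' => conj (F c) (G l') end) ch).

Lemma szE a ch : sz (LNode a ch) = (deg ch).+1.
Proof. by []. Qed.

Lemma restrE P off a ch :
  restr P off (LNode a ch) =
  if P (off + (deg ch).+1)%N then [:: LNode a (restrF_from P off ch)]
  else restrF_from P off ch.
Proof.
rewrite /=.
match goal with |- context [?go off ch] =>
  have E : forall l o, go o l = restrF_from P o l by elim=> //= c l IH o; rewrite IH end.
by rewrite E.
Qed.

Lemma graftE g off a ch :
  graft g off (LNode a ch) =
  LNode a (graftF_from g off ch ++ g (off + (deg ch).+1)%N).
Proof.
rewrite /=.
match goal with |- context [?go off ch] =>
  have E : forall l o, go o l = graftF_from g o l by elim=> //= c l IH o; rewrite IH end.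
by rewrite E.
Qed.

Lemma postE a ch : post (LNode a ch) = postF ch ++ [:: a].
Proof. by []. Qed.

Lemma postF_cons c f : postF (c :: f) = post c ++ postF f.
Proof. by []. Qed.
Lemma postF_cat f1 f2 : postF (f1 ++ f2) = postF f1 ++ postF f2.
Proof. by rewrite /postF map_cat flatten_cat. Qed.
Lemma deg_cons c f : deg (c :: f) = (sz c + deg f)%N.
Proof. by []. Qed.
Lemma deg_cat f1 f2 : deg (f1 ++ f2) = (deg f1 + deg f2)%N.
Proof. by rewrite /deg map_cat sumn_cat. Qed.

Lemma size_post t : size (post t) = sz t.
Proof.
elim/lnode_ind2: t => a ch H; rewrite postE szE size_cat addn1; congr _.+1.
by elim: ch H => //= c ch IH [E /IH]; rewrite postF_cons size_cat E => ->.
Qed.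
Lemma size_postF f : size (postF f) = deg f.
Proof. by elim: f => //= c f IH; rewrite size_cat size_post IH. Qed.

Definition selp (P : pred nat) (s : seq nat) (off : nat) :=
  [seq x.1 | x <- zip s (iota off.+1 (size s)) & P x.2].

Lemma selp_cat P s1 s2 off :
  selp P (s1 ++ s2) off = selp P s1 off ++ selp P s2 (off + size s1).
Proof.
by rewrite /selp size_cat iotaD zip_cat ?size_iota // filter_cat map_cat addSn.
Qed.

Lemma restrF_cons P off c f :
  restrF_from P off (c :: f) = restr P off c ++ restrF_from P (off + sz c) f.
Proof. by []. Qed.

Lemma postF_restr_gen P :
  (forall t off, postF (restr P off t) = selp P (post t) off) /\
  (forall f off, postF (restrF_from P off f) = selp P (postF f) off).
Proof.
have forest : forall f, allQ (fun t => forall off, postF (restr P off t) = selp P (post t) off) f ->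
     forall off, postF (restrF_from P off f) = selp P (postF f) off.
  elim=> [|c f IH] //=. move=> [Hc /IH Hf] off.
  by rewrite postF_cat Hc Hf postF_cons selp_cat size_post.
have tree : forall t off, postF (restr P off t) = selp P (post t) off.
  elim/lnode_ind2=> a ch /forest H off.
  rewrite restrE postE selp_cat size_postF.
  rewrite /selp /= -/(selp _ _ _) -addnS.
  case: (P _); last by rewrite cats0 H.
  by rewrite postF_cons postE H cats0.
split=> // f; apply: forest; elim: f => //= c f ->; split.
Qed.

Definition sortedF lo (f : tree) :=
  pairwise ltn (map lab_of f) && all (sorted_node lo) f.

Lemma sorted_nodeE lo a ch :
  sorted_node lo (LNode a ch) = (lo < a) && sortedF a ch.
Proof. by rewrite /= /sortedF sorted_pairwise //; apply: ltn_trans. Qed.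

Lemma sorted_treeE t : sorted_tree t = is_ntree t && sortedF 0 t.
Proof. by rewrite /sorted_tree /sortedF sorted_pairwise //; apply: ltn_trans. Qed.

Lemma sorted_node_gt lo t : sorted_node lo t -> lo < lab_of t.
Proof. by case: t => a ch; rewrite sorted_nodeE => /andP[]. Qed.

Lemma sorted_node_le lo lo' t : lo' <= lo -> sorted_node lo t -> sorted_node lo' t.
Proof.
case: t => a ch H; rewrite !sorted_nodeE => /andP[h ->]; rewrite andbT.
exact: leq_ltn_trans h.
Qed.

Lemma sortedF_le lo lo' f : lo' <= lo -> sortedF lo f -> sortedF lo' f.
Proof.
rewrite /sortedF => H /andP[-> /allP A]; apply/allP => c /A; exact: sorted_node_le.
Qed.

Lemma sortedF_gt lo f : sortedF lo f -> all (fun c => lo < lab_of c) f.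
Proof. by move=> /andP[_ /allP A]; apply/allP => c /A /sorted_node_gt. Qed.

Lemma sortedF_cons lo c f :
  sortedF lo (c :: f) =
  [&& sorted_node lo c, all (fun d => lab_of c < lab_of d) f & sortedF lo f].
Proof.
rewrite /sortedF /= all_map.
apply/idP/idP => [/andP[/andP[A B] /andP[C D]]|/and3P[C A /andP[B D]]].
  by apply/and3P; split => //; apply/andP.
by apply/andP; split; apply/andP.
Qed.

Lemma sortedF_cat lo f1 f2 :
  sortedF lo (f1 ++ f2) =
  [&& allrel ltn (map lab_of f1) (map lab_of f2), sortedF lo f1 & sortedF lo f2].
Proof.
rewrite /sortedF map_cat pairwise_cat all_cat.
apply/idP/idP => [/andP[/and3P[A B C] /andP[D E]]|/and3P[A /andP[B D] /andP[C E]]].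
  by apply/and3P; split => //; apply/andP.
by apply/andP; split; apply/andP => //; split => //; apply/andP.
Qed.

Section Restr.
Variable P : pred nat.

Lemma restr_nil_gen :
  (forall t off, (forall q, off < q -> ~~ P q) -> restr P off t = [::]) /\
  (forall f off, (forall q, off < q -> ~~ P q) -> restrF_from P off f = [::]).
Proof.
have forest : forall f, allQ (fun t => forall off, (forall q, off < q -> ~~ P q) -> restr P off t = [::]) f ->
  forall off, (forall q, off < q -> ~~ P q) -> restrF_from P off f = [::].
  elim=> [|c f IH] //= [Hc /IH Hf] off H.
  rewrite Hc ?Hf // => q Hq; apply: H; apply: leq_ltn_trans Hq; exact: leq_addr.
have tree : forall t off, (forall q, off < q -> ~~ P q) -> restr P off t = [::].
  elim/lnode_ind2=> a ch /forest Hf off H.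
  by rewrite restrE (negbTE (H _ _)) ?Hf // addnS ltnS leq_addr.
split=> // f; apply: forest; elim: f => //= c f IH; split=> //; apply: tree.
Qed.

Lemma restr_ne_gen :
  (forall t off, restr P off t != [::] -> exists2 q, q <= off + sz t & P q) /\
  (forall f off, restrF_from P off f != [::] -> exists2 q, q <= off + deg f & P q).
Proof.
have forest : forall f, allQ (fun t => forall off, restr P off t != [::] -> exists2 q, q <= off + sz t & P q) f ->
  forall off, restrF_from P off f != [::] -> exists2 q, q <= off + deg f & P q.
  elim=> [|c f IH] //= [Hc /IH Hf] off.
  case: (restr P off c =P [::]) => [-> /= /Hf|/eqP /Hc] [q Hq Pq]; exists q => //.
    by rewrite deg_cons addnA.
  by rewrite deg_cons addnA (leq_trans Hq) ?leq_addr.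
have tree : forall t off, restr P off t != [::] -> exists2 q, q <= off + sz t & P q.
  elim/lnode_ind2=> a ch /forest Hf off.
  rewrite restrE; case: ifP => [Hp _|_ /Hf [q Hq Pq]]; first by exists (off + (deg ch).+1).
  by exists q => //; rewrite (leq_trans Hq) // szE leq_add2l.
split=> // f; apply: forest; elim: f => //= c f IH; split=> //; apply: tree.
Qed.

Hypothesis hP : forall q0 p q, q0 <= p -> p < q -> P q0 -> ~~ P p -> ~~ P q.

Lemma restr_sorted_gen :
  (forall t lo off, sorted_node lo t ->
     sortedF lo (restr P off t) /\ all (fun c => lab_of t <= lab_of c) (restr P off t)) /\
  (forall f lo off, sortedF lo f ->
     sortedF lo (restrF_from P off f) /\
     (forall m, all (fun c => m < lab_of c) f -> all (fun c => m < lab_of c) (restrF_from P off f))).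
Proof.
have forest : forall f, allQ (fun t => forall lo off, sorted_node lo t ->
     sortedF lo (restr P off t) /\ all (fun c => lab_of t <= lab_of c) (restr P off t)) f ->
   forall lo off, sortedF lo f ->
     sortedF lo (restrF_from P off f) /\
     (forall m, all (fun c => m < lab_of c) f -> all (fun c => m < lab_of c) (restrF_from P off f)).
  elim=> [|c f IH] // [Hc /IH Hf] lo off.
  rewrite sortedF_cons => /and3P[sc fc sf].
  have [Sc Tc] := Hc lo off sc.
  have [Sf Tf] := Hf lo (off + sz c) sf.
  split; last first.
    move=> m /andP[mc mf]; rewrite restrF_cons all_cat Tf // andbT.
    apply/allP => d /(allP Tc); exact: leq_trans.
  rewrite restrF_cons sortedF_cat Sc Sf !andbT.
  move: Sc Tc Sf Tf; clear Hc; case: c sc fc => a ch sc fc Sc Tc Sf Tf; move: Sc Tc; rewrite restrE.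
  case: ifP => [Pp _ _|nPp Sc Tc].
    by rewrite allrel1l all_map; apply: Tf.
  case: (restrF_from P off ch =P [::]) => [-> //|/eqP].
  move=> /(proj2 restr_ne_gen) [q0 Hq0 Pq0].
  rewrite (proj2 restr_nil_gen f (off + sz (LNode a ch))) ?allrel0r //.
  move=> q Hq; apply: (hP (q0 := q0) (p := off + (deg ch).+1)).
  all: rewrite ?nPp //; try exact: Hq.
  by rewrite addnS (leq_trans Hq0).
have tree : forall t lo off, sorted_node lo t ->
     sortedF lo (restr P off t) /\ all (fun c => lab_of t <= lab_of c) (restr P off t).
  elim/lnode_ind2=> a ch /forest Hf lo off.
  rewrite sorted_nodeE => /andP[la sa].
  have [Sc Tc] := Hf a off sa.
  have Tc' := Tc a (sortedF_gt sa).
  rewrite restrE; case: ifP => _.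
    by rewrite sortedF_cons sorted_nodeE la Sc /= leqnn.
  split; first exact: sortedF_le (ltnW la) Sc.
  by apply/allP => d /(allP Tc') /ltnW.
split=> // f; apply: forest; elim: f => //= c f IH; split=> //; apply: tree.
Qed.
End Restr.

Lemma maplabE g a ch : maplab g (LNode a ch) = LNode (g a) (maplabF g ch).
Proof. by []. Qed.

Lemma post_maplab g :
  (forall t, post (maplab g t) = map g (post t)) /\
  (forall f, postF (maplabF g f) = map g (postF f)).
Proof.
have forest : forall f, allQ (fun t => post (maplab g t) = map g (post t)) f ->
  postF (maplabF g f) = map g (postF f).
  by elim=> [|c f IH] // [Hc /IH Hf]; rewrite /maplabF map_cons postF_cons -/(maplabF g f) Hc Hf postF_cons map_cat.
have tree : forall t, post (maplab g t) = map g (post t).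
  by elim/lnode_ind2=> a ch /forest H; rewrite maplabE !postE H map_cat.
split=> // f; apply: forest; elim: f => //= c f IH; split=> //; apply: tree.
Qed.

Lemma deg_maplab g f : deg (maplabF g f) = deg f.
Proof. by rewrite -!size_postF (proj2 (post_maplab g)) size_map. Qed.

Lemma lab_in_post t : lab_of t \in post t.
Proof. by case: t => a ch; rewrite postE mem_cat mem_seq1 eqxx orbT. Qed.

Lemma pairwise_map_mono (g : nat -> nat) (s : seq nat) :
  {in s &, forall a b, a < b -> g a < g b} ->
  pairwise ltn s -> pairwise ltn (map g s).
Proof.
elim: s => [|x s IH] //= H /andP[Hx Hs]; apply/andP; split.
  rewrite all_map; apply/allP => y ys /=; apply: H; rewrite ?inE ?eqxx ?ys ?orbT //.
  exact: (allP Hx).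
by apply: IH => // a b ha hb; apply: H; rewrite inE ?ha ?hb orbT.
Qed.

Lemma sorted_map_gen (g : nat -> nat) :
  (forall t lo lo', sorted_node lo t -> (forall b, b \in post t -> lo < b -> lo' < g b) ->
     {in post t &, forall a b, a < b -> g a < g b} -> sorted_node lo' (maplab g t)) /\
  (forall f lo lo', sortedF lo f -> (forall b, b \in postF f -> lo < b -> lo' < g b) ->
     {in postF f &, forall a b, a < b -> g a < g b} -> sortedF lo' (maplabF g f)).
Proof.
have forest : forall f, allQ (fun t => forall lo lo', sorted_node lo t -> (forall b, b \in post t -> lo < b -> lo' < g b) ->
     {in post t &, forall a b, a < b -> g a < g b} -> sorted_node lo' (maplab g t)) f ->
  forall lo lo', sortedF lo f -> (forall b, b \in postF f -> lo < b -> lo' < g b) ->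
     {in postF f &, forall a b, a < b -> g a < g b} -> sortedF lo' (maplabF g f).
  move=> f Hall lo lo' /andP[pf af] Hb Hm; apply/andP; split.
    have -> : map lab_of (maplabF g f) = map g (map lab_of f).
      by rewrite /maplabF -!map_comp; apply: eq_map; case.
    apply: pairwise_map_mono pf => a b /mapP[c cf ->] /mapP[d df ->].
    have sub : forall c, c \in f -> lab_of c \in postF f.
      move=> e; rewrite /postF => ef; apply/flattenP; exists (post e).
        exact: map_f.
      exact: lab_in_post.
    by apply: Hm; apply: sub.
  elim: f Hall af Hb Hm {pf} => [|c f IH] // [Hc /IH Hf] /andP[ac af] Hb Hm.
  rewrite /maplabF map_cons /= -/(maplabF g f); apply/andP; split.
    apply: Hc ac _ _ => [b bp|a b ha hb]; apply: Hb || apply: Hm; rewrite postF_cons mem_cat ?bp ?ha ?hb //.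
  apply: Hf af _ _ => [b bp|a b ha hb]; apply: Hb || apply: Hm; rewrite postF_cons mem_cat ?bp ?ha ?hb ?orbT //.
have tree : forall t lo lo', sorted_node lo t -> (forall b, b \in post t -> lo < b -> lo' < g b) ->
     {in post t &, forall a b, a < b -> g a < g b} -> sorted_node lo' (maplab g t).
  elim/lnode_ind2=> a ch /forest Hf lo lo'; rewrite sorted_nodeE => /andP[la sa] Hb Hm.
  rewrite maplabE sorted_nodeE; apply/andP; split.
    by apply: Hb la; exact: (lab_in_post (LNode a ch)).
  apply: Hf sa _ _ => [b bp ab|x y hx hy].
    by apply: Hm ab => //; rewrite postE mem_cat ?bp ?mem_seq1 ?eqxx ?orbT.
  by apply: Hm; rewrite postE mem_cat ?hx ?hy.
split=> // f; apply: forest; elim: f => //= c f IH; split=> //; apply: tree.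
Qed.

Lemma sortedF_shift m lo f : sortedF lo f -> sortedF (m + lo) (shift m f).
Proof.
move=> H; apply: (proj2 (sorted_map_gen _)) H _ _ => [b _ |a b _ _]; by rewrite ltn_add2l.
Qed.

Lemma postF_shift m f : postF (shift m f) = map (addn m) (postF f).
Proof. exact: (proj2 (post_maplab _)). Qed.

Lemma deg_shift m f : deg (shift m f) = deg f.
Proof. exact: deg_maplab. Qed.

Lemma count_le_lt a b s : a < b -> b \in s ->
  count (fun x => x <= a) s < count (fun x => x <= b) s.
Proof.
move=> ab; elim: s => [|x s IH] //; rewrite inE => /orP[/eqP <-|bs] /=.
  rewrite leqnn (leqNgt b a) ab /= add1n ltnS.
  by apply: sub_count => y /= ya; apply: leq_trans ya (ltnW ab).
rewrite -addnS; apply: leq_add (IH bs).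
by case: (leqP x a) => //= xa; rewrite (leq_trans xa (ltnW ab)).
Qed.

Lemma count_ge1 b s : b \in s -> 0 < count (fun x => x <= b) s.
Proof. by move=> bs; rewrite -has_count; apply/hasP; exists b. Qed.

Lemma perm_std s : uniq s ->
  perm_eq (map (fun a => count (fun b => b <= a) s) s) (iota 1 (size s)).
Proof.
move=> us; set g := fun a => _.
have ginj : {in s &, injective g}.
  move=> a b ha hb E; case: (ltngtP a b) => // ab.
    by have := count_le_lt ab hb; rewrite -/(g a) -/(g b) E ltnn.
  by have := count_le_lt ab ha; rewrite -/(g a) -/(g b) E ltnn.
have um : uniq (map g s) by rewrite map_inj_in_uniq.
have sub : {subset map g s <= iota 1 (size s)}.
  move=> x /mapP[a ha ->]; rewrite mem_iota count_ge1 //= add1n ltnS.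
  exact: count_size.
have [_ E] := uniq_min_size um sub (eq_leq (etrans (size_iota _ _) (esym (size_map _ _)))).
by apply: uniq_perm => //; apply: iota_uniq.
Qed.

Lemma std_sorted f : sortedF 0 f -> uniq (postF f) -> sorted_tree (std f).
Proof.
move=> sf uf; rewrite sorted_treeE; apply/andP; split.
  rewrite /is_ntree /std (proj2 (post_maplab _)) deg_maplab -size_postF.
  exact: perm_std.
apply: (proj2 (sorted_map_gen _)) sf _ _ => [b bp _|a b ha hb ab].
  exact: count_ge1.
exact: count_le_lt.
Qed.

Lemma lab_in_postF c f : c \in f -> lab_of c \in postF f.
Proof.
by move=> cf; apply/flattenP; exists (post c); [exact: map_f | exact: lab_in_post].
Qed.

Lemma ntree_lab t x : is_ntree t -> x \in postF t -> 0 < x <= deg t.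
Proof.
by move=> /perm_mem H; rewrite H mem_iota add1n ltnS.
Qed.

Lemma ntree_uniq t : is_ntree t -> uniq (postF t).
Proof. by move=> /perm_uniq ->; apply: iota_uniq. Qed.

Lemma sorted_over s w : sorted_tree s -> sorted_tree w ->
  sorted_tree (s ++ shift (deg s) w).
Proof.
rewrite !sorted_treeE => /andP[ns ss] /andP[nw sw].
apply/andP; split.
  rewrite /is_ntree postF_cat postF_shift deg_cat deg_shift iotaD.
  rewrite perm_cat //; move: nw; rewrite /is_ntree => /(perm_map (addn (deg s))).
  by rewrite -iotaDl addnC.
have sw' : sortedF (deg s) (shift (deg s) w).
  by move: (sortedF_shift (deg s) sw); rewrite addn0.
rewrite sortedF_cat ss (sortedF_le _ sw') // !andbT.
apply/allrelP => x y /mapP[c cs ->] /mapP[d dw ->].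
have := ntree_lab ns (lab_in_postF cs) => /andP[_ h1].
have := allP (sortedF_gt sw') d dw => /= h2.
exact: leq_ltn_trans h1 h2.
Qed.

Lemma restr_uniq P off f : uniq (postF f) -> uniq (postF (restrF_from P off f)).
Proof.
rewrite (proj2 (postF_restr_gen P)) /selp => u.
apply: subseq_uniq u.
have := map_subseq fst (filter_subseq (fun x => P x.2) (zip (postF f) (iota off.+1 (size (postF f))))).
move=> H; apply: subseq_trans H _.
by rewrite -/(unzip1 _) unzip1_zip // size_iota.
Qed.

Lemma restr_interval_sorted (P : pred nat) off lo f :
  (forall q0 p q, q0 <= p -> p < q -> P q0 -> ~~ P p -> ~~ P q) ->
  sortedF lo f -> sortedF lo (restrF_from P off f).
Proof. by move=> hP sf; have [] := proj2 (restr_sorted_gen hP) f lo off sf. Qed.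

Lemma convex_int i j q0 p q : q0 <= p -> p < q -> (i <= q0 <= j) -> ~~ (i <= p <= j) -> ~~ (i <= q <= j).
Proof.
move=> h1 h2 /andP[h3 h4]; rewrite negb_and -!ltnNge => /orP[h|h]; apply/negP=> /andP[h5 h6]; lia.
Qed.

Lemma convex_int2 i j q0 p q : q0 <= p -> p < q -> (i < q0 <= j) -> ~~ (i < p <= j) -> ~~ (i < q <= j).
Proof. exact: convex_int. Qed.

Lemma sorted_sub_int t i j : sorted_tree t -> sorted_tree (std (sub_int t i j)).
Proof.
rewrite sorted_treeE => /andP[nt st]; apply: std_sorted.
  exact: restr_interval_sorted (@convex_int i j) st.
exact: restr_uniq (ntree_uniq nt).
Qed.

Lemma sorted_Delta s pr : sorted_tree s -> pr \in DeltaT s ->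
  sorted_tree pr.1 && sorted_tree pr.2.
Proof.
by move=> ss /mapP[k _ ->] /=; rewrite !sorted_sub_int.
Qed.

Lemma mem_subseqs x s : x \in subseqs s -> subseq x s.
Proof.
elim: s x => [|a s IH] x /=; first by rewrite inE => /eqP ->.
rewrite mem_cat => /orP[/mapP[y /IH ys ->]|/IH xs] /=; first by rewrite eqxx.
exact: subseq_trans xs (subseq_cons _ _).
Qed.

Definition FG (g : nat -> tree) (l : seq nat) := flatten [seq postF (g p) | p <- l].

Lemma FG_cat g l1 l2 : FG g (l1 ++ l2) = FG g l1 ++ FG g l2.
Proof. by rewrite /FG map_cat flatten_cat. Qed.

Lemma graftF_cons g off c f :
  graftF_from g off (c :: f) = graft g off c :: graftF_from g (off + sz c) f.
Proof. by []. Qed.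

Lemma graft_perm_gen g :
  (forall t off, perm_eq (post (graft g off t)) (post t ++ FG g (iota off.+1 (sz t)))) /\
  (forall f off, perm_eq (postF (graftF_from g off f)) (postF f ++ FG g (iota off.+1 (deg f)))).
Proof.
have forest : forall f, allQ (fun t => forall off, perm_eq (post (graft g off t)) (post t ++ FG g (iota off.+1 (sz t)))) f ->
  forall off, perm_eq (postF (graftF_from g off f)) (postF f ++ FG g (iota off.+1 (deg f))).
  elim=> [|c f IH] // [Hc /IH Hf] off.
  rewrite graftF_cons postF_cons postF_cons deg_cons iotaD FG_cat addSn.
  apply/permP => x; rewrite !count_cat (permP (Hc off)) (permP (Hf (off + sz c))) !count_cat.
  lia.
have tree : forall t off, perm_eq (post (graft g off t)) (post t ++ FG g (iota off.+1 (sz t))).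
  elim/lnode_ind2=> a ch /forest Hf off.
  rewrite graftE !postE postF_cat szE -addn1 iotaD FG_cat.
  apply/permP => x; rewrite !count_cat (permP (Hf off)) !count_cat /FG /= addn1 addSnnS.
  lia.
split=> // f; apply: forest; elim: f => //= c f IH; split=> //; apply: tree.
Qed.

Lemma graftF_perm g t :
  perm_eq (postF (graftF g t)) (postF t ++ FG g (iota 1 (deg t).+1)).
Proof.
rewrite /graftF postF_cat -addn1 iotaD FG_cat.
apply/permP => x; rewrite !count_cat (permP ((proj2 (graft_perm_gen g)) t 0)) !count_cat /FG /= (addnC 1).
lia.
Qed.

Lemma postF_flatten (ls : seq tree) : postF (flatten ls) = flatten (map postF ls).
Proof. by elim: ls => //= l ls IH; rewrite postF_cat IH. Qed.

Lemma sumn_map (T : Type) (F : T -> nat) s : sumn [seq F i | i <- s] = \sum_(i <- s) F i.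
Proof. by rewrite sumnE big_map. Qed.

Lemma mem_zip2 (S T : eqType) (s : seq S) (t : seq T) i b :
  (i, b) \in zip s t -> i \in s /\ b \in t.
Proof.
elim: s t => [|x s IH] [|y t] //=; rewrite inE => /orP[/eqP[-> ->]|/IH[h1 h2]].
  by rewrite !inE !eqxx.
by rewrite !inE h1 h2 !orbT.
Qed.

Definition gsel (r : seq nat) (B : seq tree) (p : nat) : tree :=
  flatten [seq rb.2 | rb <- zip r B & rb.1 == p].

Lemma FG_perm (r : seq nat) (B : seq tree) (P : seq nat) : uniq P -> {subset r <= P} -> size B <= size r ->
  perm_eq (FG (gsel r B) P) (flatten (map postF B)).
Proof.
move=> uP sub sB; apply/permP => x.
rewrite /FG /gsel !count_flatten -!map_comp !sumn_map.
have -> : \sum_(p <- P) (count x \o (postF \o (fun p : nat => flatten [seq rb.2 | rb <- zip r B & rb.1 == p]))) p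
  = \sum_(p <- P) \sum_(rb <- zip r B) (if rb.1 == p then count x (postF rb.2) else 0).
  apply: eq_bigr => p _ /=; rewrite postF_flatten count_flatten -!map_comp sumn_map.
  by rewrite /= big_filter big_mkcond.
rewrite exchange_big /=.
rewrite [RHS](_ : _ = \sum_(rb <- zip r B) count x (postF rb.2)); last first.
  by rewrite -(big_map snd predT (fun b => count x (postF b))) -/(unzip2 _) unzip2_zip.
apply: eq_big_seq => -[i b] /mem_zip2 [ir _] /=.
rewrite (bigD1_seq i (sub _ ir) uP) /= eqxx big1 ?addn0 //.
by move=> j /negbTE; rewrite eq_sym => ->.
Qed.

Lemma count_split (T : Type) (Q1 Q2 Q3 : pred T) s :
  (forall y, Q1 y + Q2 y = Q3 y :> nat) -> count Q1 s + count Q2 s = count Q3 s.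
Proof.
move=> H; elim: s => //= y s <-; rewrite -H; lia.
Qed.

Lemma interval_perm (s : seq (nat * nat)) l c h :
  path ltn l c -> all (fun x => x <= h) c -> l <= h ->
  perm_eq (flatten [seq filter (fun x => lh.1 < x.2 <= lh.2) s | lh <- zip (l :: c) (rcons c h)])
          (filter (fun x => l < x.2 <= h) s).
Proof.
elim: c l => [|c1 c IH] l /=; first by rewrite cats0.
move=> /andP[lc1 pc] /andP[c1h ch] lh.
apply/permP => x; rewrite count_cat (permP (IH c1 pc ch c1h)) !count_filter.
apply: count_split => y /=.
case: (x y) => //=; case: (leqP y.2 c1) => H1; case: (ltnP l y.2) => H2;
  case: (leqP y.2 h) => H3; case: (ltnP c1 y.2) => H4 //=; lia.
Qed.

Lemma filter_all_iota (s : seq nat) l :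
  [seq x <- zip s (iota l.+1 (size s)) | l < x.2 <= l + size s] = zip s (iota l.+1 (size s)).
Proof.
apply/all_filterP; elim: s l => //= a s IH l.
rewrite ltnSn /= addnS leq_addr /=.
have := IH l.+1; apply: sub_all => x /= /andP[h1 h2]; apply/andP; split; lia.
Qed.

Definition blocks (u : tree) (c : seq nat) :=
  [seq restrF (fun p => (lh.1 < p <= lh.2)%N) u | lh <- zip (0 :: c) (rcons c (deg u))].

Lemma blocks_perm u c : path ltn 0 c -> all (fun x => x <= deg u) c ->
  perm_eq (flatten (map postF (blocks u c))) (postF u).
Proof.
move=> pc ch.
set zz := zip (postF u) (iota 1 (size (postF u))).
have -> : flatten (map postF (blocks u c)) =
   map fst (flatten [seq filter (fun x => lh.1 < x.2 <= lh.2) zz | lh <- zip (0 :: c) (rcons c (deg u))]).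
  rewrite /blocks -map_comp map_flatten -map_comp; congr flatten; apply: eq_map => lh /=.
  by rewrite /restrF (proj2 (postF_restr_gen _)).
have := perm_map fst (interval_perm zz pc ch (leq0n _)).
move/perm_trans; apply.
have := filter_all_iota (postF u) 0; rewrite add0n /zz -size_postF => ->.
by rewrite -/(unzip1 _) unzip1_zip // size_iota.
Qed.

Lemma gselP (r : seq nat) (B : seq tree) p : uniq r -> size r <= size B ->
  gsel r B p = [::] \/ gsel r B p \in B.
Proof.
move=> ur sr; rewrite /gsel.
have : size [seq rb <- zip r B | rb.1 == p] <= 1.
  rewrite size_filter.
  have -> : count (fun rb : nat * tree => rb.1 == p) (zip r B) = count (pred1 p) (unzip1 (zip r B)).
    by rewrite count_map; apply: eq_count => rb /=.
  by rewrite unzip1_zip // count_uniq_mem // leq_b1.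
have : forall rb, rb \in [seq rb <- zip r B | rb.1 == p] -> rb.2 \in B.
  by move=> [i b]; rewrite mem_filter => /andP[_ /mem_zip2 []].
case: [seq rb <- zip r B | rb.1 == p] => [|rb [|? ?]] //= H _; first by left.
by right; rewrite cats0; apply: H; rewrite inE eqxx.
Qed.

Lemma lab_graft g off t : lab_of (graft g off t) = lab_of t.
Proof. by case: t => a ch; rewrite graftE. Qed.

Lemma labs_graftF g off f : map lab_of (graftF_from g off f) = map lab_of f.
Proof. by elim: f off => //= c f IH off; rewrite lab_graft IH. Qed.

Lemma all_lab (P : pred nat) (f : tree) : all (fun d => P (lab_of d)) f = all P (map lab_of f).
Proof. by rewrite all_map. Qed.

Lemma graft_sorted_gen N g : (forall p, sortedF N (g p)) ->
  (forall t lo off, sorted_node lo t -> all (fun x => x <= N) (post t) -> sorted_node lo (graft g off t)) /\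
  (forall f lo off, sortedF lo f -> all (fun x => x <= N) (postF f) -> sortedF lo (graftF_from g off f)).
Proof.
move=> Hg.
have forest : forall f, allQ (fun t => forall lo off, sorted_node lo t -> all (fun x => x <= N) (post t) -> sorted_node lo (graft g off t)) f ->
  forall lo off, sortedF lo f -> all (fun x => x <= N) (postF f) -> sortedF lo (graftF_from g off f).
  elim=> [|c f IH] // [Hc /IH Hf] lo off.
  rewrite sortedF_cons postF_cons all_cat => /and3P[sc fc sf] /andP[pc pf].
  rewrite graftF_cons sortedF_cons Hc // Hf // andbT /=.
  by rewrite lab_graft all_lab labs_graftF -all_lab.
have tree : forall t lo off, sorted_node lo t -> all (fun x => x <= N) (post t) -> sorted_node lo (graft g off t).
  elim/lnode_ind2=> a ch /forest Hf lo off.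
  rewrite sorted_nodeE postE all_cat => /andP[la sa] /andP[pch /andP[aN _]].
  rewrite graftE sorted_nodeE la sortedF_cat Hf // (sortedF_le aN (Hg _)) !andbT /=.
  rewrite labs_graftF; apply/allrelP => x y /mapP[c cch ->] yg.
  have h1 := allP pch _ (lab_in_postF cch).
  have := sortedF_gt (Hg (off + (deg ch).+1)); rewrite all_lab => /allP /(_ y yg) h2.
  exact: leq_ltn_trans h1 h2.
split=> // f; apply: forest; elim: f => //= c f IH; split=> //; apply: tree.
Qed.

Lemma graftF_sorted N g t : (forall p, sortedF N (g p)) ->
  sortedF 0 t -> all (fun x => x <= N) (postF t) -> sortedF 0 (graftF g t).
Proof.
move=> Hg st pt; rewrite /graftF sortedF_cat (proj2 (graft_sorted_gen Hg)) //.
rewrite (sortedF_le (leq0n _) (Hg _)) !andbT labs_graftF.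
apply/allrelP => x y /mapP[c cch ->] yg.
have h1 := allP pt _ (lab_in_postF cch).
have := sortedF_gt (Hg (deg t).+1); rewrite all_lab => /allP /(_ y yg) h2.
exact: leq_ltn_trans h1 h2.
Qed.

Lemma sorted_star s w z : sorted_tree s -> sorted_tree w -> z \in starT s w -> sorted_tree z.
Proof.
rewrite /starT => ss sw.
have := ss; rewrite sorted_treeE => /andP[ns sfs].
have := sw; rewrite sorted_treeE => /andP[nw sfw].
set n := deg s; set u := shift n w.
have su : sortedF n u by move: (sortedF_shift n sfw); rewrite addn0.
case Eu: u => [|x l]; first by rewrite /star0 inE => /eqP ->.
rewrite /star0 -Eu => /flattenP [L /mapP[c cin ->]] /mapP[r].
rewrite mem_filter => /andP[/eqP szr rin] ->.
have -> : graft_part s u c r = graftF (gsel r (blocks u c)) s by [].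
have subc := mem_subseqs cin; have subr := mem_subseqs rin.
have pc : path ltn 0 c.
  have : subseq (0 :: c) (iota 0 (deg u).-1.+1) by rewrite /=; exact: subc.
  by move/(subseq_sorted ltn_trans) => /(_ (iota_ltn_sorted _ _)).
have chh : all (fun x => x <= deg u) c.
  apply/allP => y /(mem_subseq subc); rewrite mem_iota; lia.
have ur : uniq r by apply: subseq_uniq subr (iota_uniq _ _).
have sr : {subset r <= iota 1 n.+1} by apply: mem_subseq.
have szB : size (blocks u c) = size r by rewrite size_map size_zip size_rcons /= szr minnn.
have sB : forall b, b \in blocks u c -> sortedF n b.
  move=> b /mapP[lh _ ->]; apply: restr_interval_sorted su.
  exact: convex_int2.
have Hg : forall p, sortedF n (gsel r (blocks u c) p).
  by move=> p; case: (gselP p ur (eq_leq (esym szB))) => [->|/sB] //.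
rewrite sorted_treeE; apply/andP; split; last first.
  apply: graftF_sorted Hg sfs _; apply/allP => y ys.
  by have /andP[] := ntree_lab ns ys.
have Hp : perm_eq (postF (graftF (gsel r (blocks u c)) s)) (iota 1 (n + deg w)).
  apply: perm_trans (graftF_perm _ _) _.
  rewrite iotaD; apply: perm_cat; first exact: ns.
  apply: perm_trans (FG_perm (iota_uniq _ _) sr (eq_leq szB)) _.
  apply: perm_trans (blocks_perm pc chh) _.
  rewrite /u postF_shift (add1n n) -(addn1 n) iotaDl.
  exact: perm_map nw.
by rewrite /is_ntree -size_postF (perm_size Hp) size_iota.
Qed.

Import GRing.Theory.

Section Lin.
Variable K : fieldType.
Local Open Scope ring_scope.

Lemma coef_cat (X : eqType) (v1 v2 : fsum K X) x :
  coef (v1 ++ v2) x = coef v1 x + coef v2 x.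
Proof. by rewrite /coef big_cat. Qed.

Lemma coef_flatten (X : eqType) (vs : seq (fsum K X)) x :
  coef (flatten vs) x = \sum_(v <- vs) coef v x.
Proof. by rewrite /coef big_flatten. Qed.

Lemma coef_mapc (X : eqType) (c : K) (l : seq X) x :
  coef [seq (c, z) | z <- l] x = c *+ count_mem x l.
Proof.
elim: l => [|z l IH]; first by rewrite /coef big_nil.
rewrite /coef big_cons /= -/(coef _ _) IH eq_sym.
by case: (x == z) => //=; rewrite mulrS.
Qed.

Lemma sum_neq0 (I : Type) (r : seq I) (F : I -> K) :
  \sum_(i <- r) F i != 0 -> exists i, F i != 0.
Proof.
elim: r => [|i r IH]; first by rewrite big_nil eqxx.
rewrite big_cons; case: (boolP (F i == 0)) => [/eqP ->|]; last by exists i.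
by rewrite add0r.
Qed.

Lemma coef_sum (X : eqType) (v : fsum K X) (G : X -> K) :
  \sum_(a <- v) a.1 * G a.2 = \sum_(s <- undup (map snd v)) coef v s * G s.
Proof.
symmetry.
transitivity (\sum_(s <- undup (map snd v)) \sum_(a <- v) (if a.2 == s then a.1 * G a.2 else 0)).
  apply: eq_bigr => s _; rewrite /coef mulr_suml big_mkcond /=.
  by apply: eq_bigr => a _; case: eqP => // ->.
rewrite exchange_big /=; apply: eq_big_seq => a av.
have aS : a.2 \in undup (map snd v) by rewrite mem_undup map_f.
rewrite (bigD1_seq _ aS (undup_uniq _)) /= eqxx big1 ?addr0 //.
by move=> s; rewrite eq_sym => /negbTE ->.
Qed.

Lemma sum_coef_nz (X : eqType) (v : fsum K X) (G : X -> K) :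
  \sum_(a <- v) a.1 * G a.2 != 0 -> exists s, coef v s != 0 /\ G s != 0.
Proof.
rewrite coef_sum => /sum_neq0 [s]; rewrite mulf_eq0 negb_or => /andP[] *.
by exists s.
Qed.

Lemma natr_neq0 (n : nat) : (n%:R : K) != 0 -> n != 0%N.
Proof. by apply: contra => /eqP ->. Qed.

Lemma bilin_span (op : tree -> tree -> seq tree) (P : pred tree) (x y : fsum K tree) :
  in_span P x -> in_span P y ->
  (forall s w z, P s -> P w -> z \in op s w -> P z) ->
  in_span P (bilin op x y).
Proof.
move=> Hx Hy Hop z.
have -> : coef (bilin op x y) z =
  \sum_(a <- x) a.1 * \sum_(b <- y) b.1 * (count_mem z (op a.2 b.2))%:R.
  rewrite /bilin coef_flatten big_map; apply: eq_bigr => a _.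
  rewrite coef_flatten big_map mulr_sumr; apply: eq_bigr => b _.
  by rewrite coef_mapc mulr_natr mulrnAr.
move=> /(@sum_coef_nz _ _ (fun s => \sum_(b <- y) b.1 * (count_mem z (op s b.2))%:R)).
move=> [s [/Hx Ps]] /(@sum_coef_nz _ _ (fun w => (count_mem z (op s w))%:R)).
move=> [w [/Hy Pw]] /natr_neq0.
move=> Hc; apply: (Hop s w) => //.
by apply/negPn; apply: contra Hc => /count_memPn ->.
Qed.

Lemma coprod_span (P : pred tree) (Q : pred (tree * tree)) (x : fsum K tree) :
  in_span P x -> (forall s pr, P s -> pr \in DeltaT s -> Q pr) ->
  in_span Q (coprod x).
Proof.
move=> Hx Hop z.
have -> : coef (coprod x) z = \sum_(a <- x) a.1 * (count_mem z (DeltaT a.2))%:R.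
  rewrite /coprod coef_flatten big_map; apply: eq_bigr => a _.
  by rewrite coef_mapc mulr_natr.
move=> /(@sum_coef_nz _ _ (fun s => (count_mem z (DeltaT s))%:R)).
move=> [s [/Hx Ps]] /natr_neq0 Hc; apply: (Hop s) => //.
by apply/negPn; apply: contra Hc => /count_memPn ->.
Qed.
End Lin.


Theorem proposition4p5 (K : fieldType) :
  sorted_tree [::] /\
  (forall x y : fsum K tree, in_span sorted_tree x -> in_span sorted_tree y ->
     in_span sorted_tree (bilin starT x y)) /\
  (forall x y : fsum K tree, in_span sorted_tree x -> in_span sorted_tree y ->
     in_span sorted_tree (bilin overT x y)) /\
  (forall x : fsum K tree, in_span sorted_tree x ->
     in_span (fun p : tree * tree => sorted_tree p.1 && sorted_tree p.2) (coprod x)).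
Proof.
split; first by [].
split.
  move=> x y hx hy; apply: bilin_span hx hy _ => s w z; exact: sorted_star.
split.
  move=> x y hx hy; apply: bilin_span hx hy _ => s w z ss sw.
  by rewrite inE => /eqP ->; exact: sorted_over.
move=> x hx; apply: coprod_span hx _ => s pr ss; exact: sorted_Delta.
Qed.
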